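(* Let $m,n,k$ be positive integers with $(m,k-1)=1$ and $n=\mathrm{ind}_m(k)$, let $G=G(m,n,k)=\langle a,b;\ a^m=1,\ b^n=1,\ b^{-1}ab=a^k\rangle$ and let $S\subseteq\mathbb{Z}_m$ be a base. Then $\mathrm{orb}(x,S^* )$ is basic for every $x\in S^*$ if and only if $\Sigma_G(S)$ is complete. In this case $\Sigma_G(S)=\dot{\bigcup}_{x\in S^*}C(x,1)$ (a disjoint union) and $|\Sigma_G(S)|=m\,|S^*|$.
   Context: $\mathrm{ind}_m(k)$ is the least positive integer $d$ with $k^d\equiv 1\pmod m$. Elements of $G$ are written uniquely as $a^ib^j$, $i\in\mathbb{Z}_m$, $j\in\mathbb{Z}_n$; $k_t=k^t-1\pmod m$. Maps are written on the right and composed left to right. For $x,y\in\mathbb{Z}_m$, $\mu(x,y):G\to G$ is $(a^ib^j)\mu(x,y)=a^{xik^j-yk_j}$, and $C(x,y)=\{\mu(x,yz):z\in\mathbb{Z}_m\}$. For $S\subseteq\mathbb{Z}_m$, $I(S)$ is the set of elements of $S$ invertible in $\mathbb{Z}_m$ and $S^*$ is the multiplicative subsemigroup of $\mathbb{Z}_m$ generated by $S$. A base is $S\subseteq \mathbb{Z}_m$ with $0\in S$ and $I(S)\ne\varnothing$. $\Sigma_G(S)$ is the semigroup under composition generated by $\{\mu(s,z):s\in S,z\in\mathbb{Z}_m\}$. For $x\in S^*$, $Y(x)=\{s^*z: s^*\in S^*, z\in\mathbb{Z}_m, \exists s\in S,\ x\equiv ss^*\pmod m\}$, $\mathcal{F}_G(x,S)=\{C(x,y):y\in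 Y(x)\}$; this family is complete if $C(x,1)\in\mathcal{F}_G(x,S)$, and $\Sigma_G(S)$ is complete if every $x$-family ($x\in S^*$) is complete. $\mathrm{orb}(x,S^* )=\{xy:y\in I(S^* )\}$ is basic if it meets $S$. *)

(* Defs.v *)
From mathcomp Require Import all_boot zmodp.
From mathcomp Require Import boolp.

Set Implicit Arguments.
Unset Strict Implicit.
Unset Printing Implicit Defensive.

(* Z_m for a positive integer m, represented as 'I_m (m = m.-1.+1 when 0 < m);
   arithmetic is the arithmetic of zmodp (Zp_add, Zp_mul, Zp_opp, inZp, Zp1). *)
Notation Zm m := 'I_(m.-1).+1.

Definition is_ind (m k n : nat) : Prop :=
  0 < n /\ k ^ n = 1 %[mod m] /\ (forall d, 0 < d < n -> k ^ d <> 1 %[mod m]).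

(* Elements of G(m,n,k) in normal form a^i b^j, i in Z_m, j in Z_n, encoded (i, j);
   Z_n is 'I_n.-1.+1, which is 'I_n since n = ind_m(k) > 0. *)
Notation Gel m n := (Zm m * 'I_(n.-1).+1)%type.

Section Maps.
Variables (m n k : nat).

Definition mu (x y : Zm m) (g : Gel m n) : Gel m n :=
  (Zp_add (Zp_mul (Zp_mul x g.1) (inZp (k ^ g.2)))
          (Zp_opp (Zp_mul y (inZp (k ^ g.2 - 1)))), ord0).

Definition muf (x y : Zm m) : {ffun Gel m n -> Gel m n} := [ffun g => mu x y g].

(* composition, maps written on the right: g (f ; h) = h (f g) *)
Definition compR (f h : {ffun Gel m n -> Gel m n}) : {ffun Gel m n -> Gel m n} :=
  [ffun g => h (f g)].

Definition Cset (x y : Zm m) : {set {ffun Gel m n -> Gel m n}} :=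
  [set muf x (Zp_mul y z) | z : Zm m].

Definition unitZ (s : Zm m) : bool := [exists t : Zm m, Zp_mul s t == Zp1].

Definition Iset (S : {set Zm m}) : {set Zm m} := [set s in S | unitZ s].

Definition Sstar (S : {set Zm m}) : {set Zm m} :=
  [set x | `[< exists (s0 : Zm m) (ss : seq (Zm m)),
              [/\ s0 \in S, all (mem S) ss & foldl (fun a b => Zp_mul a b) s0 ss = x] >] ].

Definition is_base (S : {set Zm m}) : Prop :=
  Zp0 \in S /\ Iset S != set0.

Definition gens (S : {set Zm m}) : {set {ffun Gel m n -> Gel m n}} :=
  [set muf s z | s in S, z in [set: Zm m]].

Definition Sigma (S : {set Zm m}) : {set {ffun Gel m n -> Gel m n}} :=
  [set f | `[< exists f0 (fs : seq {ffun Gel m n -> Gel m n}),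
              [/\ f0 \in gens S, all (mem (gens S)) fs & foldl compR f0 fs = f] >] ].

Definition Yset (S : {set Zm m}) (x : Zm m) : {set Zm m} :=
  [set w | [exists t in Sstar S, exists z : Zm m,
              (w == Zp_mul t z) && [exists s in S, x == Zp_mul s t]]].

Definition Fam (S : {set Zm m}) (x : Zm m) : {set {set {ffun Gel m n -> Gel m n}}} :=
  [set Cset x y | y in Yset S x].

Definition family_complete (S : {set Zm m}) (x : Zm m) : Prop :=
  Cset x Zp1 \in Fam S x.

Definition Sigma_complete (S : {set Zm m}) : Prop :=
  forall x, x \in Sstar S -> family_complete S x.

Definition orbS (S : {set Zm m}) (x : Zm m) : {set Zm m} :=
  [set Zp_mul x y | y in Iset (Sstar S)].

Definition basic (S : {set Zm m}) (x : Zm m) : Prop :=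
  orbS S x :&: S != set0.

End Maps.

(* Main.v *)
Require Import Defs.
From mathcomp Require Import all_boot zmodp.
From mathcomp Require Import boolp.
From mathcomp Require Import cyclic ssralg zify.

Section H.
Variables (m n k : nat).
Local Notation T := (Zm m).

Lemma Zp_mul0 (a : T) : Zp_mul a (inZp 0) = Zp0.
Proof. by apply: val_inj; rewrite /= muln0 mod0n. Qed.

Lemma Zp_mulz0 (a : T) : Zp_mul a Zp0 = Zp0.
Proof. by apply: val_inj; rewrite /= muln0 mod0n. Qed.

Lemma Zp_addz0 (a : T) : Zp_add a (Zp_opp Zp0) = a.
Proof.
apply: val_inj => /=; rewrite subn0 modnn addn0 modn_small //.
Qed.

Lemma Zp_addz0' (a : T) : Zp_add a Zp0 = a.
Proof. by rewrite Zp_addC Zp_add0z. Qed.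

Lemma Zp_mulN (s w : T) : Zp_mul s (Zp_opp w) = Zp_opp (Zp_mul s w).
Proof.
have h : Zp_add (Zp_mul s (Zp_opp w)) (Zp_mul s w) = Zp0.
  by rewrite -Zp_mul_addr Zp_addNz Zp_mulz0.
rewrite -[LHS]Zp_addz0' -(Zp_addNz (Zp_mul s w)) [Zp_add (Zp_opp _) _]Zp_addC.
by rewrite Zp_addA h Zp_add0z.
Qed.

Lemma mu_comp (x y s z : T) :
  compR (muf n k x y) (muf n k s z) = muf n k (Zp_mul s x) (Zp_mul s y).
Proof.
apply/ffunP => g; rewrite !ffunE /mu /= expn0 subnn Zp_mul0 Zp_addz0.
congr (_, _).
have K1 : inZp 1 = Zp1 :> T by [].
by rewrite K1 Zp_mulz1 Zp_mul_addr !Zp_mulA Zp_mulN !Zp_mulA.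
Qed.

Lemma mu_at1 (x y : T) : muf n k x y (Zp1, ord0) = (x, ord0).
Proof.
rewrite ffunE /mu /= expn0 subnn Zp_mul0 Zp_addz0.
have K1 : inZp 1 = Zp1 :> T by [].
by rewrite K1 !Zp_mulz1.
Qed.

Lemma muf_inj1 (x y a b : T) : muf n k x a = muf n k y b -> x = y.
Proof. by move=> h; have := mu_at1 x a; rewrite h mu_at1 => -[]. Qed.

Lemma n_gt1 : 1 < m -> 0 < k -> coprime m (k - 1) -> is_ind m k n -> 1 < n.
Proof.
move=> m1 k0 cop [n0 [hn _]].
case: n n0 hn => [//|[|//]] _ hn.
move: hn; rewrite expn1 => /eqP; rewrite eqn_mod_dvd // => dv.
have := coprime_dvdr dv cop; rewrite /coprime gcdnn => /eqP E.
by rewrite E in m1.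
Qed.

Lemma muf_inj2 (x a b : T) : 0 < m -> 0 < k -> coprime m (k - 1) -> is_ind m k n ->
  muf n k x a = muf n k x b -> a = b.
Proof.
move=> m0 k0 cop ind h.
have [hp|hq] := eqVneq m.-1 0.
  have ha : val a < 1 by apply: leq_trans (ltn_ord a) _; rewrite hp.
  have hb : val b < 1 by apply: leq_trans (ltn_ord b) _; rewrite hp.
  by apply: val_inj; move: ha hb; rewrite !ltnS !leqn0 => /eqP-> /eqP->.
have m1 : 1 < m by move: hq; case: (m) m0 => [|[|]].
have n1 := n_gt1 m1 k0 cop ind.
have j1 : 1 < n.-1.+1 by case: n n1.
have := congr1 (fun f : {ffun _} => f (Zp0, inord 1)) h.
rewrite /= !ffunE /mu /= inordK // expn1 !Zp_mulz0 !(Zp_mulC Zp0) !Zp_mulz0 !Zp_add0z.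
move=> /(congr1 fst) hK.
set K := inZp (k - 1) : T.
have {}hK : Zp_opp (Zp_mul a K) = Zp_opp (Zp_mul b K) := hK.
have {}hK := GRing.oppr_inj hK.
have cK : coprime m.-1.+1 K.
  by rewrite /= coprime_modr prednK.
by rewrite -[a]Zp_mulz1 -[b]Zp_mulz1 -(Zp_mulzV cK) !Zp_mulA hK.
Qed.

Local Notation mulT := (fun a b : T => Zp_mul a b).
Lemma foldl_mulA (a b : T) us :
  foldl mulT (Zp_mul a b) us = Zp_mul a (foldl mulT b us).
Proof.
by elim: us b => [//|u us IH] b /=; rewrite -Zp_mulA IH.
Qed.

Variable S : {set T}.

Lemma SstarP x : reflect (exists s0 ss,
  [/\ s0 \in S, all (mem S) ss & foldl (fun a b => Zp_mul a b) s0 ss = x])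
  (x \in Sstar S).
Proof. by rewrite inE; apply: asboolP. Qed.

Lemma Sstar_S s : s \in S -> s \in Sstar S.
Proof. by move=> hs; apply/SstarP; exists s, [::]. Qed.

Lemma Sstar_mul x y : x \in Sstar S -> y \in Sstar S -> Zp_mul x y \in Sstar S.
Proof.
move=> /SstarP [s0 [ss [h0 h1 <-]]] /SstarP [t0 [ts [h2 h3 <-]]].
apply/SstarP; exists s0, (ss ++ t0 :: ts); split => //.
  by rewrite all_cat h1 /= h2 h3.
by rewrite foldl_cat /= foldl_mulA.
Qed.

Definition pw (t : T) j := foldl mulT t (nseq j t).

Lemma pwS t j : pw t j.+1 = Zp_mul t (pw t j).
Proof. by rewrite /pw /= foldl_mulA. Qed.

Lemma pw_Sstar t j : t \in Sstar S -> pw t j \in Sstar S.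
Proof. by move=> ht; elim: j => [//|j IH]; rewrite pwS Sstar_mul. Qed.

Lemma pw_val t j : val (pw t j) = t ^ j.+1 %% m.-1.+1.
Proof.
elim: j => [|j IH]; first by rewrite expn1 modn_small.
by rewrite pwS /= IH modnMmr -expnS.
Qed.

Lemma inv_Sstar t v : t \in Sstar S -> Zp_mul t v = Zp1 ->
  exists2 u, u \in Sstar S & Zp_mul t u = Zp1.
Proof.
move=> ht htv.
have ct : coprime m.-1.+1 t by apply: (@Zp_intro_unit _ t v); rewrite Zp_mulC.
have := Euler_exp_totient (ct : coprime _ _); rewrite coprime_sym in ct.
have := Euler_exp_totient ct.
set phi := totient _ => E.
have phi0 : 0 < phi by rewrite totient_gt0.
exists (pw t (phi * 2 - 2)); first exact: pw_Sstar.
apply: val_inj; rewrite /= pw_val modnMmr -expnS.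
have -> : (phi * 2 - 2).+1.+1 = phi * 2 by move: phi0; clear; lia.
by rewrite expnM -modnXm E modnXm exp1n.
Qed.

Lemma fold_gen (a b c : T) us :
  foldl (@compR m n) (muf n k a b) [seq muf n k u c | u <- us] =
  muf n k (foldl mulT a us) (foldl mulT b us).
Proof.
elim: us a b => [//|u us IH] a b /=.
by rewrite mu_comp IH (Zp_mulC u a) (Zp_mulC u b).
Qed.

Lemma Sigma_sub f : f \in Sigma n k S ->
  exists2 x, x \in Sstar S & exists z, f = muf n k x z.
Proof.
rewrite inE => /asboolP [f0 [fs [h0 h1 <-]]].
case/imset2P: h0 => s z hs _ ->.
have hs2 : s \in Sstar S by exact: Sstar_S.
move: hs2; clear hs.
elim: fs s z h1 => [|g fs IH] x y /= h1 hx; first by exists x => //; exists y.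
case/andP: h1 => /imset2P [s' z' hs' _ ->] h1.
rewrite mu_comp; apply: IH => //.
by rewrite Zp_mulC Sstar_mul // Sstar_S.
Qed.

Lemma Sigma_sup x z : x \in Sstar S -> family_complete n k S x ->
  muf n k x z \in Sigma n k S.
Proof.
move=> hx /imsetP [y hy E].
have : muf n k x z \in Cset n k x Zp1.
  by apply/imsetP; exists z => //; rewrite Zp_mul1z.
rewrite E => /imsetP [w _ ->].
move: hy; rewrite inE => /existsP [t /andP [ht /existsP [z0 /andP [/eqP -> /existsP [s /andP [hs /eqP ->]]]]]].
case/SstarP: ht => t0 [ts [ht0 hts Et]].
rewrite inE; apply/asboolP.
exists (muf n k s (Zp_mul z0 w)), [seq muf n k u Zp0 | u <- t0 :: ts]; split.
- by apply/imset2P; exists s (Zp_mul z0 w); rewrite ?inE.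
- rewrite all_map; apply/allP => u hu /=; apply/imset2P; exists u Zp0; rewrite ?inE //.
  by move: hu; rewrite inE => /orP [/eqP ->|hu] //; apply: (allP hts).
- rewrite fold_gen /= !foldl_mulA Et; congr (muf _ _ _ _).
  by rewrite Zp_mulC Zp_mulA.
Qed.

Hypothesis inj2 : forall x a b : T, muf n k x a = muf n k x b -> a = b.

Lemma compl_basic x : x \in Sstar S -> (basic S x <-> family_complete n k S x).
Proof.
move=> hx; split.
- case/set0Pn => e; rewrite inE => /andP [/imsetP [u hu ->] he].
  move: hu; rewrite inE => /andP [hu /existsP [v /eqP huv]].
  have [u' hu' uu'] := inv_Sstar _ _ hu huv.
  apply/imsetP; exists u'.
    rewrite inE; apply/existsP; exists u'; rewrite hu' /=.
    apply/existsP; exists Zp1; rewrite Zp_mulz1 eqxx /=.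
    apply/existsP; exists (Zp_mul x u); rewrite he /=.
    by rewrite -Zp_mulA uu' Zp_mulz1.
  apply/setP => f; apply/imsetP/imsetP => [[z _ ->]|[z _ ->]].
    exists (Zp_mul u z) => //; rewrite Zp_mulA (Zp_mulC u') uu'.
    by [].
  by exists (Zp_mul u' z) => //; rewrite Zp_mul1z.
- case/imsetP => y hy E.
  have : muf n k x (Zp_mul Zp1 Zp1) \in Cset n k x Zp1 by apply/imsetP; exists Zp1.
  rewrite E => /imsetP [w _ /inj2 E1].
  move: hy; rewrite inE => /existsP [t /andP [ht /existsP [z0 /andP [/eqP Ey /existsP [s /andP [hs /eqP Ex]]]]]].
  rewrite Ey Zp_mul1z -Zp_mulA in E1.
  have [u hu tu] := inv_Sstar _ _ ht (esym E1).
  apply/set0Pn; exists s; rewrite inE hs andbT.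
  apply/imsetP; exists u.
    rewrite inE hu /=; apply/existsP; exists t; by rewrite Zp_mulC tu.
  by rewrite Ex -Zp_mulA tu Zp_mulz1.
Qed.

End H.

Theorem theorem4p11 (m n k : nat) (S : {set Zm m}) :
  0 < m -> 0 < k -> coprime m (k - 1) -> is_ind m k n ->
  is_base S ->
  ((forall x, x \in Sstar S -> basic S x) <-> Sigma_complete n k S) /\
  (Sigma_complete n k S ->
     [/\ Sigma n k S = \bigcup_(x in Sstar S) Cset n k x Zp1,
         (forall x y, x \in Sstar S -> y \in Sstar S -> x != y ->
            [disjoint Cset n k x Zp1 & Cset n k y Zp1])
       & #|Sigma n k S| = m * #|Sstar S| ]).
Proof.
move=> m0 k0 cop ind _.
have inj2 : forall x a b : Zm m, muf n k x a = muf n k x b -> a = b.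
  by move=> x a b; apply: muf_inj2.
split.
  split=> H x hx; first by apply/(compl_basic _ _ _ _ inj2 _ hx)/H.
  by apply/(compl_basic _ _ _ _ inj2 _ hx)/H.
move=> H.
have ESig : Sigma n k S = \bigcup_(x in Sstar S) Cset n k x Zp1.
  apply/setP => f; apply/idP/idP.
    case/(Sigma_sub _ _ _ _ _) => x hx [z ->]; apply/bigcupP; exists x => //.
    by apply/imsetP; exists z => //; rewrite Zp_mul1z.
  case/bigcupP => x hx /imsetP [z _ ->].
  exact: (Sigma_sup _ _ _ _ _ _ hx (H x hx)).
split => //.
  move=> x y hx hy hxy; rewrite disjoint_subset; apply/subsetP => f /imsetP [a _ ->].
  rewrite inE; apply/negP => /imsetP [b _ /(muf_inj1 _ _ _ _ _ _ _) E].
  by rewrite E eqxx in hxy.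
have -> : Sigma n k S =
    [set muf n k xz.1 xz.2 | xz in setX (Sstar S) [set: Zm m]].
  rewrite ESig; apply/setP => f; apply/bigcupP/imsetP.
    case=> x hx /imsetP [z _ ->]; exists (x, Zp_mul Zp1 z) => //.
    by rewrite inE hx inE.
  case=> [[x z]]; rewrite inE => /andP [/= hx _] ->; exists x => //.
  by apply/imsetP; exists z => //; rewrite Zp_mul1z.
rewrite card_imset; last first.
  move=> [x a] [y b] /= E; have Exy := muf_inj1 _ _ _ _ _ _ _ E; subst y.
  by rewrite (inj2 _ _ _ E).
rewrite cardsX cardsT card_ord mulnC; congr (_ * _); exact: prednK.
Qed.
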